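(* In the fermionic setting described in the context, if $g\in\mathrm{SO}_*(V)$ then the Gaussian vector $f_{T_g}\in\mathcal F(V)$ satisfies $$a_{gJg^{-1}}(gv)\,f_{T_g}=0\quad\text{for all }v\in V,$$ where $a_{gJg^{-1}}(gv)=\tfrac12\bigl(\psi(gv)+i\,\psi(gJv)\bigr)$.
   Context: Let $V$ be a real vector space of dimension $2m$ with a positive definite symmetric bilinear form $d$ and a real-linear $J$ with $J^2=-1$ and $d(Ju,Jv)=d(u,v)$. Put $s(u,v):=d(Ju,v)$; make $V$ a complex vector space by $(a+bi)v:=av+bJv$ with Hermitian inner product $\langle u|v\rangle:=d(u,v)+is(u,v)$ (antilinear in $u$). $A^t$ is the $d$-transpose. For $g\in\mathrm{SO}(V)$ let $p_g:=\tfrac12(g-JgJ)$, $q_g:=\tfrac12(g+JgJ)$; $\mathrm{SO}_*(V)$ is the set of $g\in\mathrm{SO}(V)$ with $p_g$ invertible, and for such $g$, $T_g:=q_gp_g^{-1}$ (antilinear and $d$-skew-symmetric). The fermionic Fock space $\mathcal F(V)$ is the exterior algebra $\Lambda(V)$ of the complex space $V$ with inner product $\langle u_1\wedge\dots\wedge u_k|v_1\wedge\dots\wedge v_l\rangle=\delta_{kl}\det[\langle u_i|v_j\rangle]$ and unit vacuum $\Omega\in\Lambda^0$. Creation: $a^\dagger(v)\xi:=v\wedge\xi$; annihilation: $a(v)(v_1\wedge\dots\wedge v_k):=\sum_j(-1)^{j-1}\langle v|v_j\rangle v_1\wedge\dots\widehat{v_j}\dots\wedge v_k$, $a(v)\Omega=0$;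 field $\psi(v):=a^\dagger(v)+a(v)$. For a complex structure $K$ on $V$, $a_K(w):=\tfrac12(\psi(w)+i\psi(Kw))$. For an antilinear $d$-skew-symmetric $T$ and an orthonormal basis $e_1,\dots,e_m$ of $V$, $H_T:=\sum_{i,j}\langle e_i|Te_j\rangle e_i\wedge e_j$ and the Gaussian is $f_T:=\sum_{0\le 2r\le m}\frac{1}{2^rr!}H_T^{\wedge r}$ (independent of the basis). *)

(* Defs.v *)
From HB Require Import structures.
From mathcomp Require Import all_boot all_order all_algebra.
From mathcomp Require Import reals complex.
Set Implicit Arguments. Unset Strict Implicit. Unset Printing Implicit Defensive.
Import Order.TTheory GRing.Theory Num.Theory.
Local Open Scope ring_scope.
Local Open Scope complex_scope.

(* The real vector space V of dimension 2m is modelled as 'cV[R]_(2m)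
   (column vectors); real-linear maps on V are (2m x 2m) real matrices acting
   on the left.  d is given by a matrix D: d(u,v) = u^T D v. *)
Section Fermion.
Variables (R : realType) (m : nat).
Notation V := 'cV[R]_(m + m).
Notation C := (R[i]).

Definition dform (D : 'M[R]_(m + m)) (u v : V) : R := (u^T *m D *m v) 0 0.

Definition pos_def_sym (D : 'M[R]_(m + m)) : Prop :=
  D^T = D /\ forall v : V, v != 0 -> 0 < dform D v v.

Definition compl_struct (D J : 'M[R]_(m + m)) : Prop :=
  J *m J = - 1%:M /\ forall u v : V, dform D (J *m u) (J *m v) = dform D u v.

Definition sform (D J : 'M[R]_(m + m)) (u v : V) : R := dform D (J *m u) v.
Definition herm (D J : 'M[R]_(m + m)) (u v : V) : C :=
  (dform D u v)%:C + 'i * (sform D J u v)%:C.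

Definition in_SO (D g : 'M[R]_(m + m)) : Prop :=
  (forall u v : V, dform D (g *m u) (g *m v) = dform D u v) /\ \det g = 1.

Definition p_of (J g : 'M[R]_(m + m)) : 'M[R]_(m + m) := 2%:R^-1 *: (g - J *m g *m J).
Definition q_of (J g : 'M[R]_(m + m)) : 'M[R]_(m + m) := 2%:R^-1 *: (g + J *m g *m J).
Definition in_SOstar (D J g : 'M[R]_(m + m)) : Prop :=
  in_SO D g /\ p_of J g \in unitmx.
Definition T_of (J g : 'M[R]_(m + m)) : 'M[R]_(m + m) := q_of J g *m invmx (p_of J g).

Definition fk_orthonormal (D J : 'M[R]_(m + m)) (e : 'I_m -> V) : Prop :=
  forall i j, herm D J (e i) (e j) = (i == j)%:R.

(* Fock space Lambda(V), in coordinates w.r.t. the fk_orthonormal basis e: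
   the coordinate at S = {s_1 < ... < s_k} is the coefficient of
   e_{s_1} /\ ... /\ e_{s_k}. *)
Definition Fock := {ffun {set 'I_m} -> C}.

Definition fscale (c : C) (x : Fock) : Fock := [ffun S => c * x S].

(* sign of e_S /\ e_T = wsign S T * e_{S u T}, for disjoint S, T *)
Definition wsign (S T : {set 'I_m}) : C :=
  (-1) ^+ #|[set p : 'I_m * 'I_m | [&& p.1 \in S, p.2 \in T & (p.2 < p.1)%N]]|.

Definition wedge (x y : Fock) : Fock :=
  [ffun U => \sum_(S : {set 'I_m}) \sum_(T : {set 'I_m} | [disjoint S & T] && (S :|: T == U))
       wsign S T * x S * y T].

Definition vacuum : Fock := [ffun S => (S == set0)%:R].

(* a vector v of V, viewed in Lambda^1(V) = V: coefficients <e_i|v> *)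
Definition embed (D J : 'M[R]_(m + m)) (e : 'I_m -> V) (v : V) : Fock :=
  [ffun S => \sum_(i : 'I_m) (S == [set i])%:R * herm D J (e i) v].

Definition creation (D J : 'M[R]_(m + m)) (e : 'I_m -> V) (v : V) (xi : Fock) : Fock := wedge (embed D J e v) xi.

(* a(v)(e_{s_1}/\.../\e_{s_k}) = sum_j (-1)^(j-1) <v|e_{s_j}> e_S without s_j *)
Definition annihilation (D J : 'M[R]_(m + m)) (e : 'I_m -> V) (v : V) (xi : Fock) : Fock :=
  [ffun U : {set 'I_m} => \sum_(j : 'I_m | j \notin U)
      (-1) ^+ #|[set s in U | (s < j)%N]| * herm D J v (e j) * xi (j |: U)].

Definition field (D J : 'M[R]_(m + m)) (e : 'I_m -> V) (v : V) (xi : Fock) : Fock :=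
  creation D J e v xi + annihilation D J e v xi.

Definition a_K (D J : 'M[R]_(m + m)) (e : 'I_m -> V) (K : 'M[R]_(m + m)) (w : V) (xi : Fock) : Fock :=
  fscale (2%:R^-1) (field D J e w xi + fscale 'i (field D J e (K *m w) xi)).

Definition H_T (D J : 'M[R]_(m + m)) (e : 'I_m -> V) (T : 'M[R]_(m + m)) : Fock :=
  \sum_(i : 'I_m) \sum_(j : 'I_m)
     fscale (herm D J (e i) (T *m e j)) (wedge (embed D J e (e i)) (embed D J e (e j))).

Definition wpow (x : Fock) (r : nat) : Fock := iter r (wedge x) vacuum.

Definition gaussian (D J : 'M[R]_(m + m)) (e : 'I_m -> V) (T : 'M[R]_(m + m)) : Fock :=
  \sum_(r < m./2.+1) fscale ((2 ^ r * r`!)%:R^-1) (wpow (H_T D J e T) r).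

End Fermion.

(* Main.v *)
Require Import Defs.
From HB Require Import structures.
From mathcomp Require Import all_boot all_order all_algebra.
From mathcomp Require Import reals complex.
From mathcomp Require Import ring zify.
Set Implicit Arguments. Unset Strict Implicit. Unset Printing Implicit Defensive.
Import Order.TTheory GRing.Theory Num.Theory.
Local Open Scope ring_scope.


Section FockAlg.
Variables (R : realType) (m : nat).
Local Notation C := (R[i]).
Local Notation F := (Fock R m).
Local Notation set := {set 'I_m}.
Local Notation ws := (@wsign R m).
Local Notation vac := (vacuum R m).

Lemma scC (c z : C) : c *: z = c * z.
Proof. by []. Qed.

Lemma addFE (x y : F) (U : set) : (x + y) U = x U + y U.
Proof. by rewrite ffunE. Qed.
Lemma oppFE (x : F) (U : set) : (- x) U = - x U.
Proof. by rewrite ffunE. Qed.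
Lemma scaleFE c (x : F) (U : set) : (c *: x) U = c * x U.
Proof. by rewrite ffunE. Qed.

Definition sg (U : set) (k : 'I_m) : C := (-1) ^+ #|[set t in U | (t < k)%N]|.

Lemma card_lt_U1 (U : set) (k l : 'I_m) : k \notin U ->
  #|[set t in k |: U | (t < l)%N]| = ((k < l)%N + #|[set t in U | (t < l)%N]|)%N.
Proof.
move=> kU; case: (ltnP k l) => hkl.
- have -> : [set t in k |: U | (t < l)%N] = k |: [set t in U | (t < l)%N].
    by apply/setP=> t; rewrite !inE; case: eqP => [->|_] //=; rewrite hkl.
  by rewrite cardsU1 !inE (negbTE kU).
- have -> : [set t in k |: U | (t < l)%N] = [set t in U | (t < l)%N].
    apply/setP=> t; rewrite !inE; case: eqP => [->|_] //=.
    by rewrite ltnNge hkl (negbTE kU).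
  by [].
Qed.

Lemma sgU1 (U : set) k l : k \notin U -> sg (k |: U) l = (-1) ^+ (k < l)%N * sg U l.
Proof. by move=> kU; rewrite /sg card_lt_U1 // exprD. Qed.

Lemma sgD1 (U : set) k l : k \in U -> sg U l = (-1) ^+ (k < l)%N * sg (U :\ k) l.
Proof.
move=> kU; rewrite -sgU1 ?setD11 //; by rewrite setD1K.
Qed.

Lemma sgsq (U : set) k : sg U k * sg U k = 1.
Proof. by rewrite /sg -exprMn mulrNN mulr1 expr1n. Qed.

Lemma collapse (S0 U : set) (G : set -> C) :
  \sum_(T : set | [disjoint S0 & T] && (S0 :|: T == U)) G T = (S0 \subset U)%:R * G (U :\: S0).
Proof.
have E : forall T : set, ([disjoint S0 & T] && (S0 :|: T == U)) = (S0 \subset U) && (T == U :\: S0).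
  move=> T; apply/idP/idP.
  - case/andP => dis /eqP <-; rewrite subsetUl /=; apply/eqP.
    rewrite setDUl setDv set0U; apply/esym/setDidPl; by rewrite disjoint_sym.
  - case/andP => sub /eqP ->.
    have -> : S0 :|: U :\: S0 = U.
      apply/setP => t; rewrite !inE; case: (boolP (t \in S0)) => [h|_] /=.
        by rewrite (subsetP sub _ h).
      by [].
    rewrite eqxx andbT.
    rewrite -setI_eq0; apply/eqP/setP => t; rewrite !inE.
    by case: (t \in S0); rewrite ?andbF.
rewrite (eq_bigl _ _ E); case: (boolP (S0 \subset U)) => h /=.
  by rewrite big_pred1_eq mul1r.
by rewrite big_pred0 // mul0r.
Qed.

Definition pairs (S T : set) := [set p : 'I_m * 'I_m | [&& p.1 \in S, p.2 \in T & (p.2 < p.1)%N]].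

Lemma wsign0 (T : set) : ws set0 T = 1.
Proof.
rewrite /wsign (_ : [set p : 'I_m * 'I_m | _] = set0) ?cards0 ?expr0 //.
by apply/setP => p; rewrite !inE.
Qed.

Lemma wsignU1 (S T : set) k : k \notin S -> ws (k |: S) T = sg T k * ws S T.
Proof.
move=> kS; rewrite /wsign /sg -exprD.
have -> : [set p : 'I_m * 'I_m | [&& p.1 \in k |: S, p.2 \in T & (p.2 < p.1)%N]]
   = ((fun t => (k, t)) @: [set t in T | (t < k)%N]) :|: pairs S T.
  apply/setP => [[a b]]; rewrite !inE /=.
  apply/idP/idP.
  - case/and3P => /orP [/eqP ->|aS] bT ba.
      by apply/orP; left; apply/imsetP; exists b => //; rewrite inE bT ba.
    by rewrite aS bT ba orbT.
  - case/orP => [/imsetP [t] | ].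
      by rewrite inE => /andP [tT tk] [-> ->]; rewrite eqxx tT tk.
    by case/and3P => -> -> ->; rewrite orbT.
rewrite cardsU card_imset; last by move=> x y [].
rewrite (_ : _ :&: _ = set0) ?cards0 ?subn0 //.
apply/setP => [[a b]]; rewrite !inE /=.
apply/negbTE; apply/andP => [[/imsetP [t _] [-> _]]] /and3P [kS' _ _].
by rewrite kS' in kS.
Qed.

Lemma wsign1 (T : set) k : ws [set k] T = sg T k.
Proof. by rewrite -(setU0 [set k]) wsignU1 ?inE // wsign0 mulr1. Qed.


Definition basis (k : 'I_m) : F := [ffun S : set => (S == [set k])%:R].
Definition cr (k : 'I_m) (y : F) : F := wedge (basis k) y.
Definition an (k : 'I_m) (y : F) : F :=
  [ffun U : set => (k \notin U)%:R * sg U k * y (k |: U)].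

Lemma anE k y (U : set) : an k y U = (k \notin U)%:R * sg U k * y (k |: U).
Proof. by rewrite ffunE. Qed.

Lemma crE k y (U : set) : cr k y U = (k \in U)%:R * sg U k * y (U :\ k).
Proof.
rewrite /cr /wedge ffunE (bigD1 [set k]) //=.
rewrite [X in _ + X]big1 ?addr0; last first.
  move=> S nS; apply: big1 => T _; by rewrite ffunE (negbTE nS) mulr0 mul0r.
under eq_bigr do rewrite ffunE eqxx mulr1.
rewrite collapse sub1set wsign1.
case: (boolP (k \in U)) => kU; last by rewrite !mul0r.
by rewrite (sgD1 k kU) ltnn expr0 mul1r mulrA.
Qed.

Lemma wedgeDl (x x' y : F) : wedge (x + x') y = wedge x y + wedge x' y.
Proof.
apply/ffunP => U; rewrite !ffunE -big_split; apply: eq_bigr => S _.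
rewrite -big_split; apply: eq_bigr => T _; rewrite !ffunE; by rewrite mulrDr mulrDl.
Qed.

Lemma wedge0l (y : F) : wedge 0 y = 0.
Proof.
apply/ffunP => U; rewrite !ffunE big1 // => S _; rewrite big1 // => T _.
by rewrite ffunE mulr0 mul0r.
Qed.

Lemma wedgeZl c (x y : F) : wedge (c *: x) y = c *: wedge x y.
Proof.
apply/ffunP => U; rewrite !ffunE scC mulr_sumr; apply: eq_bigr => S _.
rewrite mulr_sumr; apply: eq_bigr => T _; rewrite !ffunE scC; ring.
Qed.

Lemma wedge_suml I (r : seq I) (P : pred I) (G : I -> F) y :
  wedge (\sum_(i <- r | P i) G i) y = \sum_(i <- r | P i) wedge (G i) y.
Proof. exact: (big_morph (fun x => wedge x y) (fun x x' => wedgeDl x x' y) (wedge0l y)). Qed.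


Lemma crD k (x y : F) : cr k (x + y) = cr k x + cr k y.
Proof. apply/ffunP => U; rewrite crE [in RHS]ffunE ?crE !ffunE; ring. Qed.
Lemma crZ k c (x : F) : cr k (c *: x) = c *: cr k x.
Proof. apply/ffunP => U; rewrite crE [in RHS]ffunE ?crE !ffunE !scC; ring. Qed.
Lemma cr0 k : cr k 0 = 0.
Proof. apply/ffunP => U; rewrite crE [in RHS]ffunE ?crE !ffunE; ring. Qed.
Lemma crN k (x : F) : cr k (- x) = - cr k x.
Proof. apply/ffunP => U; rewrite crE [in RHS]ffunE ?crE !ffunE; ring. Qed.
Lemma cr_sum k I (r : seq I) (P : pred I) (G : I -> F) :
  cr k (\sum_(i <- r | P i) G i) = \sum_(i <- r | P i) cr k (G i).
Proof. exact: (big_morph (cr k) (crD k) (cr0 k)). Qed.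

Lemma anD k (x y : F) : an k (x + y) = an k x + an k y.
Proof. apply/ffunP => U; rewrite anE [in RHS]ffunE ?anE !ffunE; ring. Qed.
Lemma anZ k c (x : F) : an k (c *: x) = c *: an k x.
Proof. apply/ffunP => U; rewrite anE [in RHS]ffunE ?anE !ffunE !scC; ring. Qed.
Lemma an0 k : an k 0 = 0.
Proof. apply/ffunP => U; rewrite anE [in RHS]ffunE ?anE !ffunE; ring. Qed.
Lemma anN k (x : F) : an k (- x) = - an k x.
Proof. apply/ffunP => U; rewrite anE [in RHS]ffunE ?anE !ffunE; ring. Qed.
Lemma an_sum k I (r : seq I) (P : pred I) (G : I -> F) :
  an k (\sum_(i <- r | P i) G i) = \sum_(i <- r | P i) an k (G i).
Proof. exact: (big_morph (an k) (anD k) (an0 k)). Qed.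

Lemma an_vac k : an k vac = 0.
Proof.
apply/ffunP => U; rewrite anE !ffunE.
have -> : (k |: U == set0) = false.
  by apply/negbTE/set0Pn; exists k; rewrite !inE eqxx.
by rewrite mulr0.
Qed.


Lemma lt_xor (k l : 'I_m) : k != l -> ((k < l)%N + (l < k)%N = 1)%N.
Proof. by case: (ltngtP k l) => // /val_inj ->; rewrite eqxx. Qed.

Lemma an_cr k l (y : F) : an k (cr l y) + cr l (an k y) = (k == l)%:R *: y.
Proof.
apply/ffunP => U; rewrite addFE scaleFE anE crE crE anE.
case: (eqVneq k l) => [<-|kl].
  case: (boolP (k \in U)) => kU /=.
    rewrite (setD1K kU) !inE eqxx /= (sgD1 k kU) ltnn expr0 mul1r.
    transitivity (sg (U :\ k) k * sg (U :\ k) k * y U); first by ring.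
    by rewrite sgsq.
  rewrite !inE eqxx /= (sgU1 k kU) ltnn expr0 mul1r setU1K //.
  transitivity (sg U k * sg U k * y U); first by ring.
  by rewrite sgsq.
have E1 : l \in k |: U = (l \in U) by rewrite !inE eq_sym (negbTE kl).
have E2 : (k \notin U :\ l) = (k \notin U) by rewrite !inE kl.
have E3 : (k |: U) :\ l = k |: (U :\ l).
  apply/setP => t; rewrite !inE; case: (eqVneq t k) => [->|] //=; by rewrite kl.
rewrite E1 E2 E3.
case: (boolP (k \in U)) => kU /=; first by ring.
case: (boolP (l \in U)) => lU /=; last by ring.
rewrite (@sgU1 U k l kU) (@sgD1 U l k lU).
move: (lt_xor kl); case: (k < l)%N; case: (l < k)%N => //= _; ring.
Qed.

Lemma cr_cr k l (y : F) : cr k (cr l y) = - cr l (cr k y).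
Proof.
apply/ffunP => U; rewrite oppFE !crE.
case: (eqVneq k l) => [<-|kl].
  by rewrite !inE eqxx /=; ring.
have E1 : (l \in U :\ k) = (l \in U) by rewrite !inE eq_sym kl.
have E2 : (k \in U :\ l) = (k \in U) by rewrite !inE kl.
have E3 : U :\ k :\ l = U :\ l :\ k by rewrite !setDDl setUC.
rewrite E1 E2 E3.
case: (boolP (k \in U)) => kU /=; last by ring.
case: (boolP (l \in U)) => lU /=; last by ring.
rewrite (@sgD1 U l k lU) (@sgD1 U k l kU).
move: (lt_xor kl); case: (k < l)%N; case: (l < k)%N => //= _; ring.
Qed.


Lemma sg0 k : sg set0 k = 1.
Proof.
rewrite /sg (_ : [set t in set0 | _] = set0) ?cards0 ?expr0 //.
by apply/setP => t; rewrite !inE.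
Qed.

Lemma sg1 j k : sg [set j] k = (-1) ^+ (j < k)%N.
Proof. by rewrite -(setU0 [set j]) sgU1 ?inE // sg0 mulr1. Qed.

Lemma pairE i j (S : set) :
  cr i (basis j) S = (S == [set i; j])%:R * (i != j)%:R * (-1) ^+ (j < i)%N.
Proof.
rewrite crE ffunE.
case: (eqVneq i j) => [<-|ij].
  have -> : (S :\ i == [set i]) = false.
    by apply/negbTE/eqP => h; move: (set11 i); rewrite -h !inE eqxx.
  by rewrite /= !mulr0 mul0r.
case: (boolP (i \in S)) => iS /=; last first.
  have -> : (S == [set i; j]) = false.
    by apply/negbTE; apply: contraNneq iS => ->; rewrite !inE eqxx.
  by rewrite !mul0r.
have -> : (S :\ i == [set j]) = (S == [set i; j]).
  apply/eqP/eqP => [h|->]; first by rewrite -(setD1K iS) h.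
  by rewrite setU1K // inE.
case: eqP => [->|_]; last by rewrite !mulr0 !mul0r.
rewrite sgU1 ?inE // sg1 ltnn expr0 mul1r; ring.
Qed.

Lemma wedge_pair i j (y : F) : wedge (cr i (basis j)) y = cr i (cr j y).
Proof.
apply/ffunP => U; rewrite {1}/wedge ffunE.
rewrite (bigD1 [set i; j]) //= [X in _ + X]big1 ?addr0; last first.
  move=> S nS; apply: big1 => T _.
  by rewrite pairE (negbTE nS) /= !mul0r mulr0 mul0r.
under eq_bigr do rewrite pairE eqxx.
rewrite collapse crE crE.
case: (eqVneq i j) => [<-|ij].
  by rewrite !inE eqxx /=; ring.
rewrite wsignU1 ?inE // wsign1 subUset !sub1set [j == i]eq_sym ij /=.
case: (boolP (i \in U)) => iU /=; last by ring.
case: (boolP (j \in U)) => jU /=; last by ring.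
have jU' : j \in U :\ i by rewrite !inE eq_sym ij.
rewrite (@sgD1 U i i iU) (@sgD1 _ j i jU') (@sgD1 _ j j jU') setDDl ltnn.
rewrite ltnn /= !expr0; ring.
Qed.


Lemma sumFD I (r : seq I) (P : pred I) (G1 G2 : I -> F) :
  \sum_(i <- r | P i) (G1 i + G2 i) = \sum_(i <- r | P i) G1 i + \sum_(i <- r | P i) G2 i.
Proof. exact: big_split. Qed.

Lemma crdef k (y : F) : wedge (basis k) y = cr k y.
Proof. by []. Qed.

Lemma fscaleE c (x : F) : fscale c x = c *: x.
Proof. by apply/ffunP => U; rewrite !ffunE. Qed.

Definition Phi (y : F) (al be : 'I_m -> C) : F :=
  \sum_i al i *: cr i y + \sum_k be k *: an k y.

Lemma PhiD y a b a' b' :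
  Phi y a b + Phi y a' b' = Phi y (fun i => a i + a' i) (fun k => b k + b' k).
Proof.
rewrite /Phi addrACA -[X in X + _ = _]sumFD -[X in _ + X = _]sumFD.
congr (_ + _); apply: eq_bigr => i _; by rewrite scalerDl.
Qed.

Lemma PhiZ y c a b : c *: Phi y a b = Phi y (fun i => c * a i) (fun k => c * b k).
Proof.
rewrite /Phi scalerDr !scaler_sumr; congr (_ + _); apply: eq_bigr => i _; by rewrite scalerA.
Qed.

Lemma Phi_ext y a b a' b' : (forall i, a i = a' i) -> (forall k, b k = b' k) ->
  Phi y a b = Phi y a' b'.
Proof.
move=> ha hb; rewrite /Phi; congr (_ + _); apply: eq_bigr => i _; by rewrite ?ha ?hb.
Qed.

Opaque cr an.

Definition hom n (x : F) := forall S : set, #|S| != n -> x S = 0.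

Lemma hom_vac : hom 0 vac.
Proof. by move=> S; rewrite ffunE -cards_eq0 => /negbTE ->. Qed.

Lemma hom_cr k n (x : F) : hom n x -> hom n.+1 (cr k x).
Proof.
move=> h S hS; rewrite crE; case: (boolP (k \in S)) => kS; last by rewrite !mul0r.
rewrite h ?mulr0 //; move: hS; rewrite (cardsD1 k S) kS; apply: contra => /eqP ->.
by [].
Qed.

Lemma scale_inj c (w : F) : c != 0 -> c *: w = 0 -> w = 0.
Proof. by move=> nz h; rewrite -[w]scale1r -(mulVf nz) -scalerA h scaler0. Qed.

Section Ops.
Variable A : 'I_m -> 'I_m -> C.

Definition LH (y : F) : F := \sum_i \sum_j A i j *: cr i (cr j y).
Definition W (k : 'I_m) (y : F) : F := \sum_j A k j *: cr j y.

Lemma LHD (x y : F) : LH (x + y) = LH x + LH y.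
Proof.
rewrite /LH -big_split; apply: eq_bigr => i _; rewrite -big_split.
by apply: eq_bigr => j _; rewrite !crD scalerDr.
Qed.
Lemma LH0 : LH 0 = 0.
Proof. by rewrite /LH big1 // => i _; rewrite big1 // => j _; rewrite !cr0 scaler0. Qed.
Lemma LHZ c (x : F) : LH (c *: x) = c *: LH x.
Proof.
rewrite /LH scaler_sumr; apply: eq_bigr => i _; rewrite scaler_sumr.
by apply: eq_bigr => j _; rewrite !crZ !scalerA mulrC.
Qed.
Lemma LH_sum I (r : seq I) (P : pred I) (G : I -> F) :
  LH (\sum_(i <- r | P i) G i) = \sum_(i <- r | P i) LH (G i).
Proof. exact: (big_morph LH LHD LH0). Qed.

Lemma WD k (x y : F) : W k (x + y) = W k x + W k y.
Proof.
by rewrite /W -big_split; apply: eq_bigr => j _; rewrite !crD scalerDr.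
Qed.
Lemma W0 k : W k 0 = 0.
Proof. by rewrite /W big1 // => j _; rewrite !cr0 scaler0. Qed.
Lemma WZ k c (x : F) : W k (c *: x) = c *: W k x.
Proof.
rewrite /W scaler_sumr; apply: eq_bigr => j _.
by rewrite !crZ !scalerA mulrC.
Qed.
Lemma W_sum k I (r : seq I) (P : pred I) (G : I -> F) :
  W k (\sum_(i <- r | P i) G i) = \sum_(i <- r | P i) W k (G i).
Proof. exact: (big_morph (W k) (WD k) (W0 k)). Qed.

Lemma an_cr' k l (x : F) : an k (cr l x) = (k == l)%:R *: x - cr l (an k x).
Proof. by rewrite -(an_cr k l x) addrK. Qed.

Lemma an_crcr k i j (y : F) : an k (cr i (cr j y)) =
  (k == i)%:R *: cr j y - (k == j)%:R *: cr i y + cr i (cr j (an k y)).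
Proof. by rewrite an_cr' an_cr' crD crN crZ opprD opprK addrA. Qed.

Lemma K1 k (y : F) : an k (LH y) = LH (an k y) + \sum_j (A k j - A j k) *: cr j y.
Proof.
have T1 : \sum_i \sum_j A i j *: ((k == i)%:R *: cr j y) = \sum_j A k j *: cr j y.
  rewrite (bigD1 k) //= [X in _ + X]big1 ?addr0; last first.
    move=> i ik; apply: big1 => j _; by rewrite eq_sym (negbTE ik) scale0r scaler0.
  by apply: eq_bigr => j _; rewrite eqxx scale1r.
have T2 : \sum_i \sum_j A i j *: ((k == j)%:R *: cr i y) = \sum_j A j k *: cr j y.
  apply: eq_bigr => i _; rewrite (bigD1 k) //= big1 ?addr0; last first.
    move=> j jk; by rewrite eq_sym (negbTE jk) scale0r scaler0.
  by rewrite eqxx scale1r.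
transitivity ((\sum_i \sum_j A i j *: ((k == i)%:R *: cr j y)
    - \sum_i \sum_j A i j *: ((k == j)%:R *: cr i y)) + LH (an k y)).
  rewrite /LH an_sum -sumrB -sumFD; apply: eq_bigr => i _.
  rewrite an_sum -sumrB -sumFD; apply: eq_bigr => j _.
  by rewrite anZ an_crcr scalerDr scalerBr.
rewrite addrC.
congr (_ + _).
transitivity (\sum_j A k j *: cr j y - \sum_j A j k *: cr j y).
  congr (_ - _).
    exact: T1.
  exact: T2.
by rewrite -sumrB; apply: eq_bigr => j _; rewrite scalerBl.
Qed.

Lemma K2 l (y : F) : cr l (LH y) = LH (cr l y).
Proof.
rewrite /LH cr_sum; apply: eq_bigr => i _; rewrite cr_sum.
apply: eq_bigr => j _; rewrite crZ; congr (_ *: _).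
by rewrite [cr l (cr i _)]cr_cr [cr l (cr j _)]cr_cr crN opprK.
Qed.

Lemma WLH k (y : F) : W k (LH y) = LH (W k y).
Proof.
rewrite /W LH_sum; apply: eq_bigr => j _; by rewrite LHZ K2.
Qed.

Hypothesis hA : forall i j, A j i = - A i j.



Lemma K1' k (y : F) : an k (LH y) = LH (an k y) + 2%:R *: W k y.
Proof.
rewrite K1 /W scaler_sumr; congr (_ + _); apply: eq_bigr => j _.
by rewrite (hA k j) opprK scalerA mulr_natl mulr2n.
Qed.

Definition X r := iter r LH vac.

Lemma XS r : X r.+1 = LH (X r).
Proof. by []. Qed.

Lemma P1 k r : an k (X r.+1) = (2 * r.+1)%:R *: W k (X r).
Proof.
elim: r => [|r IH].
  by rewrite XS K1' an_vac LH0 add0r.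
rewrite (XS r.+1) K1' IH LHZ -WLH -(XS r) -scalerDl -natrD.
congr (_%:R *: _).
by rewrite [(2 * r.+2)%N]mulnS addnC.
Qed.

Lemma hom_LH n (x : F) : hom n x -> hom n.+2 (LH x).
Proof.
move=> h S hS; rewrite /LH sum_ffunE big1 // => i _; rewrite sum_ffunE big1 // => j _.
by rewrite scaleFE (hom_cr i (hom_cr j h)) ?mulr0.
Qed.

Lemma hom_X r : hom (2 * r)%N (X r).
Proof.
elim: r => [|r IH]; first exact: hom_vac.
rewrite (_ : (2 * r.+1 = (2 * r).+2)%N); last by rewrite mulnS.
exact: hom_LH.
Qed.

Lemma X_zero r : (m < 2 * r)%N -> X r = 0.
Proof.
move=> hr; apply/ffunP => S; rewrite [RHS]ffunE; apply: hom_X.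
have : (#|S| <= m)%N by rewrite -[X in (_ <= X)%N](card_ord m); exact: max_card.
by move=> h; apply/eqP => e; rewrite e in h; move: (leq_trans hr h); rewrite ltnn.
Qed.

Lemma W_top k : W k (X m./2) = 0.
Proof.
have hz : an k (X m./2.+1) = 0.
  rewrite X_zero ?an0 //.
  have e := odd_double_half m; have ho : (odd m <= 1)%N := leq_b1 _.
  move: e ho; move: (nat_of_bool (odd m)) (m./2) => o h.
  rewrite -mul2n => e ho; lia.
apply: (@scale_inj (2 * m./2.+1)%:R); last by rewrite -P1.
by rewrite pnatr_eq0.
Qed.

Lemma coefS i : ((2 ^ i.+1 * i.+1`!)%:R^-1 : C) * (2 * i.+1)%:R = (2 ^ i * i`!)%:R^-1.
Proof.
have -> : (2 ^ i.+1 * i.+1`! = (2 ^ i * i`!) * (2 * i.+1))%N.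
  by rewrite expnS factS; ring.
rewrite natrM invfM -mulrA mulVf ?mulr1 // pnatr_eq0.
by [].
Qed.

Definition fG := \sum_(r < m./2.+1) ((2 ^ r * r`!)%:R^-1 : C) *: X r.

Lemma anf k : an k fG = W k fG.
Proof.
rewrite /fG an_sum W_sum.
under eq_bigr do rewrite anZ.
under [RHS]eq_bigr do rewrite WZ.
rewrite big_ord_recl [RHS]big_ord_recr /= an_vac scaler0 add0r W_top scaler0 addr0.
apply: eq_bigr => i _; rewrite /bump leq0n add1n add0n -XS P1 scalerA coefS.
by [].
Qed.

Lemma core (z : 'I_m -> C) :
  \sum_i (\sum_j A i j * z j) *: cr i fG + \sum_k z k *: an k fG = 0.
Proof.
under [X in _ + X]eq_bigr do rewrite anf /W scaler_sumr.
rewrite [X in _ + X]exchange_big /= -sumFD; apply: big1 => i _.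
rewrite scaler_suml -sumFD; apply: big1 => j _.
rewrite scalerA -scalerDl (hA i j) (_ : _ + _ = 0) ?scale0r //; ring.
Qed.

End Ops.

End FockAlg.

Local Open Scope complex_scope.



Section Cplx.
Variable R : realType.
Lemma cplx_ReE (a b : R) : complex.Re (a%:C + 'i * b%:C) = a.
Proof. by rewrite /= ; simpc. Qed.
Lemma cplx_ImE (a b : R) : complex.Im (a%:C + 'i * b%:C) = b.
Proof. by rewrite /= ; simpc. Qed.
Lemma mulIC (a b : R) : 'i * (a%:C + 'i * b%:C) = (-b)%:C + 'i * a%:C.
Proof. by apply/eqP; rewrite eq_complex /=; simpc. Qed.
Lemma mulNIC (a b : R) : - 'i * (a%:C + 'i * b%:C) = b%:C + 'i * (-a)%:C.
Proof. by apply/eqP; rewrite eq_complex /=; simpc. Qed.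
Lemma Re_nat (b : bool) : complex.Re (b%:R : R[i]) = b%:R.
Proof. by case: b. Qed.
Lemma Im_nat (b : bool) : complex.Im (b%:R : R[i]) = 0.
Proof. by case: b. Qed.
End Cplx.

Section LA.
Variables (R : realType) (m : nat) (D J : 'M[R]_(m + m)) (e : 'I_m -> 'cV[R]_(m + m)).
Hypotheses (hD : pos_def_sym D) (hJ : compl_struct D J) (he : fk_orthonormal D J e).
Local Notation V := 'cV[R]_(m + m).
Local Notation d := (dform D).
Local Notation herm := (herm D J).

Lemma dformDl (u u' v : V) : d (u + u') v = d u v + d u' v.
Proof. by rewrite /dform linearD /= !mulmxDl mxE. Qed.
Lemma dformZl c (u v : V) : d (c *: u) v = c * d u v.
Proof. by rewrite /dform linearZ /= -!scalemxAl mxE. Qed.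
Lemma dformDr (u v v' : V) : d u (v + v') = d u v + d u v'.
Proof. by rewrite /dform mulmxDr mxE. Qed.
Lemma dformZr c (u v : V) : d u (c *: v) = c * d u v.
Proof. by rewrite /dform -!scalemxAr mxE. Qed.
Lemma dformNl (u v : V) : d (- u) v = - d u v.
Proof. by rewrite -scaleN1r dformZl mulN1r. Qed.
Lemma dformNr (u v : V) : d u (- v) = - d u v.
Proof. by rewrite -scaleN1r dformZr mulN1r. Qed.
Lemma dform0r (u : V) : d u 0 = 0.
Proof. by rewrite /dform mulmx0 mxE. Qed.
Lemma dform_sym (u v : V) : d u v = d v u.
Proof.
rewrite /dform; transitivity ((u^T *m D *m v)^T 0 0); first by rewrite [in RHS]mxE.
by rewrite !trmx_mul trmxK hD.1 mulmxA.
Qed.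
Lemma dform_sumr (u : V) I (r : seq I) (P : pred I) (G : I -> V) :
  d u (\sum_(i <- r | P i) G i) = \sum_(i <- r | P i) d u (G i).
Proof. exact: (big_morph (d u) (dformDr u) (dform0r u)). Qed.

Lemma JJ (u : V) : J *m (J *m u) = - u.
Proof. by rewrite mulmxA hJ.1 mulNmx mul1mx. Qed.
Lemma dJJ (u v : V) : d (J *m u) (J *m v) = d u v.
Proof. exact: hJ.2. Qed.
Lemma dJl (u v : V) : d (J *m u) v = - d u (J *m v).
Proof.
rewrite {1}(_ : v = - (J *m (J *m v))); last by rewrite JJ opprK.
by rewrite dformNr dJJ.
Qed.

Lemma hermE (x y : V) : herm x y = (d x y)%:C + 'i * (d (J *m x) y)%:C.
Proof. by []. Qed.

Lemma hermDr (x y y' : V) : herm x (y + y') = herm x y + herm x y'.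
Proof. rewrite !hermE !dformDr !rmorphD; ring. Qed.
Lemma hermZr c (x y : V) : herm x (c *: y) = c%:C * herm x y.
Proof. rewrite !hermE !dformZr !rmorphM; ring. Qed.
Lemma hermJr (x y : V) : herm x (J *m y) = 'i * herm x y.
Proof. by rewrite !hermE dJJ mulIC dJl opprK. Qed.
Lemma hermDl (x x' y : V) : herm (x + x') y = herm x y + herm x' y.
Proof. rewrite !hermE mulmxDr !dformDl !rmorphD; ring. Qed.
Lemma hermZl c (x y : V) : herm (c *: x) y = c%:C * herm x y.
Proof. rewrite !hermE -scalemxAr !dformZl !rmorphM; ring. Qed.
Lemma hermJl (x y : V) : herm (J *m x) y = - 'i * herm x y.
Proof. by rewrite !hermE mulNIC JJ dformNl. Qed.
Lemma herm0r (x : V) : herm x 0 = 0.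
Proof. by rewrite hermE !dform0r mulr0 addr0. Qed.
Lemma herm_sumr (u : V) I (r : seq I) (P : pred I) (G : I -> V) :
  herm u (\sum_(i <- r | P i) G i) = \sum_(i <- r | P i) herm u (G i).
Proof. exact: (big_morph (herm u) (hermDr u) (herm0r u)). Qed.

Lemma d_ee i j : d (e i) (e j) = (i == j)%:R.
Proof. by have := congr1 (@complex.Re _) (he i j); rewrite hermE cplx_ReE Re_nat. Qed.
Lemma d_Jee i j : d (J *m e i) (e j) = 0.
Proof. by have := congr1 (@complex.Im _) (he i j); rewrite hermE cplx_ImE Im_nat. Qed.


Lemma hermNr (x y : V) : herm x (- y) = - herm x y.
Proof. by rewrite -scaleN1r hermZr rmorphN1 mulN1r. Qed.

Definition fb (c : 'I_(m + m)) : V :=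
  match split c with inl j => e j | inr j => J *m e j end.
Definition Emx : 'M[R]_(m + m) := \matrix_(r, c) fb c r 0.

Lemma sl (j : 'I_m) : split (lshift m j) = inl j.
Proof. exact: (unsplitK (inl j)). Qed.
Lemma sr (j : 'I_m) : split (rshift m j) = inr j.
Proof. exact: (unsplitK (inr j)). Qed.

Lemma Eentry k (N : 'M[R]_(m + m, k)) a b : (Emx^T *m D *m N) a b = d (fb a) (col b N).
Proof.
rewrite /dform !mxE; apply: eq_bigr => l _; rewrite !mxE; congr (_ * _).
by apply: eq_bigr => l' _; rewrite !mxE.
Qed.

Lemma colE_fb b : col b Emx = fb b.
Proof. by apply/matrixP => r s; rewrite !mxE (ord1 s). Qed.

Lemma E_orth : Emx^T *m D *m Emx = 1%:M.
Proof.
apply/matrixP => a b; rewrite Eentry colE_fb mxE.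
case: (split_ordP a) => a' ->; case: (split_ordP b) => b' ->; rewrite /fb ?sl ?sr.
- by rewrite eq_lshift d_ee.
- by rewrite eq_lrshift -[LHS]opprK -dJl d_Jee oppr0.
- by rewrite eq_rlshift d_Jee.
- by rewrite eq_rshift dJJ d_ee.
Qed.

Lemma expand (u : V) :
  u = \sum_j (d (e j) u *: e j) + \sum_j (d (J *m e j) u *: (J *m e j)).
Proof.
have h1 : u = Emx *m (Emx^T *m D *m u) by rewrite mulmxA (mulmx1C E_orth) mul1mx.
have h2 : forall w : V, Emx *m w = \sum_c w c 0 *: fb c.
  move=> w; apply/matrixP => r s; rewrite (ord1 s) !mxE summxE.
  by apply: eq_bigr => c _; rewrite !mxE mulrC.
rewrite {1}h1 h2 big_split_ord /=; congr (_ + _); apply: eq_bigr => j _;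
  by rewrite Eentry col_id /fb ?sl ?sr.
Qed.

Section TT.
Variable T : 'M[R]_(m + m).
Hypotheses (hTJ : T *m J = - (J *m T)) (hTs : forall x y : V, d (T *m x) y = - d x (T *m y)).

Definition Amat i j := herm (e i) (T *m e j).

Lemma TJ (x : V) : T *m (J *m x) = - (J *m (T *m x)).
Proof. by rewrite mulmxA hTJ mulNmx mulmxA. Qed.

Lemma A_skew i j : Amat j i = - Amat i j.
Proof.
have E1 : d (e j) (T *m e i) = - d (e i) (T *m e j) by rewrite dform_sym hTs.
have E2 : d (J *m e j) (T *m e i) = - d (J *m e i) (T *m e j).
  by rewrite dform_sym hTs TJ dformNr dJl !opprK.
rewrite /Amat !hermE E1 E2 !rmorphN; ring.
Qed.

Lemma F1 i (u : V) : herm (e i) (T *m u) = \sum_j Amat i j * herm u (e j).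
Proof.
rewrite {1}(expand u) mulmxDr !mulmx_sumr hermDr !herm_sumr -big_split /=.
apply: eq_bigr => j _.
rewrite -!scalemxAr !hermZr TJ hermNr hermJr /Amat (hermE u) dform_sym.
rewrite (dJl u) (dform_sym u (J *m e j)) !rmorphN; ring.
Qed.

End TT.

Section Tg.
Variable g : 'M[R]_(m + m).
Hypothesis hg : in_SOstar D J g.

Lemma XJJ k (X : 'M[R]_(k, m + m)) : X *m J *m J = - X.
Proof. by rewrite -mulmxA hJ.1 mulmxN mulmx1. Qed.
Lemma JJX k (X : 'M[R]_(m + m, k)) : J *m J *m X = - X.
Proof. by rewrite hJ.1 mulNmx mul1mx. Qed.

Lemma pJ : p_of J g *m J = J *m p_of J g.
Proof.
rewrite /p_of -scalemxAl -scalemxAr mulmxBl mulmxBr !mulmxA XJJ JJX mulNmx.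
by rewrite !opprK addrC.
Qed.

Lemma qJ : q_of J g *m J = - (J *m q_of J g).
Proof.
rewrite /q_of -scalemxAl -scalemxAr mulmxDl mulmxDr !mulmxA XJJ JJX mulNmx.
by rewrite -scalerN opprD opprK addrC.
Qed.

Lemma PJ : invmx (p_of J g) *m J = J *m invmx (p_of J g).
Proof.
have pu := hg.2.
rewrite -[LHS]mulmx1 -(mulmxV pu) !mulmxA -(mulmxA _ J (p_of J g)) -pJ !mulmxA.
by rewrite mulVmx // mul1mx.
Qed.

Lemma T_J : T_of J g *m J = - (J *m T_of J g).
Proof.
by rewrite /T_of -mulmxA PJ mulmxA qJ mulNmx mulmxA.
Qed.

Lemma T_skew (x y : V) : d (T_of J g *m x) y = - d x (T_of J g *m y).
Proof.
have pu := hg.2; have hgo := hg.1.1.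
set p := p_of J g; set q := q_of J g; set P := invmx p.
have Tp : forall a : V, T_of J g *m (p *m a) = q *m a.
  by move=> a; rewrite /T_of mulmxA mulmxKV.
have ex : forall a : V, a = p *m (P *m a) by move=> a; rewrite mulmxA mulmxV // mul1mx.
rewrite (ex x) (ex y) !Tp; move: (P *m x) (P *m y) => a b.
have qa : forall c : V, q *m c = 2%:R^-1 *: (g *m c + J *m (g *m (J *m c))).
  by move=> c; rewrite /q /q_of -scalemxAl mulmxDl !mulmxA.
have pa : forall c : V, p *m c = 2%:R^-1 *: (g *m c - J *m (g *m (J *m c))).
  by move=> c; rewrite /p /p_of -scalemxAl mulmxBl !mulmxA.
rewrite !qa !pa !dformZl !dformZr !dformDl !dformDr !dformNl !dformNr.
rewrite dJJ !hgo dJJ.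
ring.
Qed.

End Tg.

End LA.



Section Conn.
Variables (R : realType) (m : nat) (D J : 'M[R]_(m + m)) (e : 'I_m -> 'cV[R]_(m + m)).
Hypotheses (hD : pos_def_sym D) (hJ : compl_struct D J) (he : fk_orthonormal D J e).
Local Notation V := 'cV[R]_(m + m).
Local Notation herm := (herm D J).

Lemma embed_e i : embed D J e (e i) = basis R i.
Proof.
apply/ffunP => S; rewrite !ffunE (bigD1 i) //= [X in _ + X]big1 ?addr0.
  by rewrite he eqxx mulr1.
by move=> k ki; rewrite he (negbTE ki) mulr0.
Qed.

Lemma embedE (x : V) : embed D J e x = \sum_i herm (e i) x *: basis R i.
Proof.
apply/ffunP => S; rewrite sum_ffunE [LHS]ffunE; apply: eq_bigr => i _.
by rewrite scaleFE ffunE mulrC.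
Qed.

Lemma creationE (x : V) y : creation D J e x y = \sum_i herm (e i) x *: cr i y.
Proof.
rewrite /creation embedE wedge_suml; apply: eq_bigr => i _; by rewrite wedgeZl crdef.
Qed.

Lemma annE (x : V) y : annihilation D J e x y = \sum_k herm x (e k) *: an k y.
Proof.
apply/ffunP => U; rewrite sum_ffunE [LHS]ffunE big_mkcond; apply: eq_bigr => k _.
rewrite scaleFE anE /sg; case: (k \notin U) => /=; ring.
Qed.

Lemma fieldE (x : V) y :
  field D J e x y = Phi y (fun i => herm (e i) x) (fun k => herm x (e k)).
Proof. by rewrite /field creationE annE. Qed.

Lemma HT_LH T y : wedge (H_T D J e T) y = LH (Amat D J e T) y.
Proof.
rewrite /H_T wedge_suml /LH; apply: eq_bigr => i _; rewrite wedge_suml.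
apply: eq_bigr => j _; by rewrite fscaleE wedgeZl !embed_e crdef wedge_pair.
Qed.

Lemma gaussE T : gaussian D J e T = fG (Amat D J e T).
Proof.
rewrite /gaussian /fG; apply: eq_bigr => r _; rewrite fscaleE; congr (_ *: _).
rewrite /wpow /X; elim: (nat_of_ord r) => //= n IH.
by rewrite HT_LH IH.
Qed.

End Conn.

Local Close Scope complex_scope.
Unset Implicit Arguments.

Theorem lemma4p6 (R : realType) (m : nat) (D J g : 'M[R]_(m + m))
  (e : 'I_m -> 'cV[R]_(m + m)) :
  pos_def_sym D -> compl_struct D J -> fk_orthonormal D J e ->
  in_SOstar D J g ->
  forall v : 'cV[R]_(m + m),
    a_K D J e (g *m J *m invmx g) (g *m v) (gaussian D J e (T_of J g)) = 0.
Proof.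
move=> hD hJ he hg v.
have gu : g \in unitmx by rewrite unitmxE hg.1.2 unitr1.
have pu := hg.2.
set y := gaussian D J e (T_of J g).
rewrite /a_K !fscaleE !fieldE PhiZ PhiD PhiZ.
have Kw : g *m J *m invmx g *m (g *m v) = g *m J *m v.
  by rewrite !mulmxA mulmxKV.
rewrite Kw.
set u := p_of J g *m v.
have Tu : T_of J g *m u = q_of J g *m v by rewrite /u /T_of mulmxA mulmxKV.
rewrite (Phi_ext y (a' := fun i => herm D J (e i) (T_of J g *m u))
                   (b' := fun k => herm D J u (e k))); last first.
- move=> k; rewrite /u /p_of -scalemxAl mulmxBl hermZl hermDl.
  rewrite (_ : J *m g *m J *m v = J *m (g *m J *m v)); last by rewrite !mulmxA.
  rewrite -scaleN1r hermZl (hermJl hJ) fmorphV rmorph_nat rmorphN rmorph1.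
  by rewrite mulN1r mulNr opprK.
- move=> i; rewrite Tu /q_of -scalemxAl mulmxDl hermZr hermDr.
  rewrite (_ : J *m g *m J *m v = J *m (g *m J *m v)); last by rewrite !mulmxA.
  rewrite (hermJr hJ) fmorphV rmorph_nat.
  by congr (_ * (_ + _ * _)).
rewrite /Phi; under eq_bigr do rewrite (F1 hD hJ he (T_J hJ hg)).
rewrite /y (gaussE he).
exact: (core (A_skew e hD hJ (T_J hJ hg) (T_skew hJ hg)) (fun j => herm D J u (e j))).
Qed.
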